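(* Let $A$ be a physical system of dimension $m$ whose Hamiltonian $H^A=\sum_{x=1}^m a_x|x\rangle\langle x|$ has a non-degenerate Bohr spectrum, and let $\mathcal{E}:A\to A$ be a quantum channel. Then $\mathcal{E}$ is time-translation covariant if and only if there exist a conditional probability distribution $\{p_{y|x}\}_{x,y\in[m]}$ (i.e. $p_{y|x}\ge0$ and $\sum_y p_{y|x}=1$ for every $x$) and an $m\times m$ positive semidefinite matrix $Q=(q_{xy})$ with diagonal entries $q_{xx}=p_{x|x}$ for all $x\in[m]$, such that the Choi matrix of $\mathcal{E}$ is $$J_\mathcal{E}^{A\tilde A}=\sum_{x,y\in[m]}p_{y|x}|x\rangle\langle x|^A\otimes|y\rangle\langle y|^{\tilde A}+\sum_{x\neq y,\ x,y\in[m]}q_{xy}|x\rangle\langle y|^A\otimes|x\rangle\langle y|^{\tilde A}.$$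
   Context: $H^A$ has a non-degenerate Bohr spectrum if for all $x,y,x',y'\in[m]$: $a_x-a_y=a_{x'}-a_{y'}$ holds iff ($x=x'$ and $y=y'$) or ($x=y$ and $x'=y'$). A channel $\mathcal{E}:A\to A$ is time-translation covariant if $\mathcal{E}(e^{-iH^At}\rho e^{iH^At})=e^{-iH^At}\mathcal{E}(\rho)e^{iH^At}$ for all $t\in\mathbb{R}$ and all states $\rho$. The Choi matrix of $\mathcal{E}$ is $J_\mathcal{E}^{A\tilde A}=\sum_{x,x'\in[m]}|x\rangle\langle x'|^A\otimes\mathcal{E}(|x\rangle\langle x'|)^{\tilde A}$, where $\tilde A$ is a copy of $A$. *)

(* Defs.v *)
From HB Require Import structures.
From mathcomp Require Import all_boot all_order all_algebra.
From mathcomp Require Import complex mxtens.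
From mathcomp Require Import reals trigo.
Set Implicit Arguments. Unset Strict Implicit. Unset Printing Implicit Defensive.
Import Order.TTheory GRing.Theory Num.Theory.
Local Open Scope ring_scope.

Section QDefs.
Variable R : realType.
Local Notation C := R[i].

Definition adjmx (p q : nat) (A : 'M[C]_(p, q)) : 'M[C]_(q, p) :=
  (map_mx Num.conj A)^T.

Definition psd (n : nat) (A : 'M[C]_n) : Prop :=
  A = adjmx A /\ forall v : 'cV[C]_n, 0 <= (adjmx v *m A *m v) 0 0.

Definition is_state (n : nat) (rho : 'M[C]_n) : Prop :=
  psd rho /\ \tr rho = 1.

(* (id_k (x) E) applied to X : 'M_(k * n), where index mxtens_index (a, x)
   stands for |a> (x) |x> *)
Definition ampl (k n : nat) (E : 'M[C]_n -> 'M[C]_n) (X : 'M[C]_(k * n))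
  : 'M[C]_(k * n) :=
  \matrix_(i, j)
    E (\matrix_(x, y) X (mxtens_index ((mxtens_unindex i).1, x))
                        (mxtens_index ((mxtens_unindex j).1, y)))
      (mxtens_unindex i).2 (mxtens_unindex j).2.

Definition completely_positive (n : nat) (E : 'M[C]_n -> 'M[C]_n) : Prop :=
  forall (k : nat) (X : 'M[C]_(k * n)), psd X -> psd (ampl E X).

Definition trace_preserving (n : nat) (E : 'M[C]_n -> 'M[C]_n) : Prop :=
  forall X : 'M[C]_n, \tr (E X) = \tr X.

Definition quantum_channel (n : nat) (E : {linear 'M[C]_n -> 'M[C]_n}) : Prop :=
  completely_positive E /\ trace_preserving E.

Definition expi (theta : R) : C := Complex (cos theta) (sin theta).

Definition evol (n : nat) (a : 'I_n -> R) (t : R) : 'M[C]_n :=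
  diag_mx (\row_x expi (- (a x * t))).

Definition nondegenerate_bohr (n : nat) (a : 'I_n -> R) : Prop :=
  forall x y x' y' : 'I_n,
    a x - a y = a x' - a y' <-> (x = x' /\ y = y') \/ (x = y /\ x' = y').

Definition time_covariant (n : nat) (a : 'I_n -> R)
  (E : 'M[C]_n -> 'M[C]_n) : Prop :=
  forall (t : R) (rho : 'M[C]_n), is_state rho ->
    E (evol a t *m rho *m adjmx (evol a t))
    = evol a t *m E rho *m adjmx (evol a t).

Definition choi (n : nat) (E : 'M[C]_n -> 'M[C]_n) : 'M[C]_(n * n) :=
  \sum_(x < n) \sum_(x' < n) (delta_mx x x' *t E (delta_mx x x')).

End QDefs.

(* Main.v *)
Require Import Defs.
From HB Require Import structures.
From mathcomp Require Import all_boot all_order all_algebra.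
From mathcomp Require Import complex mxtens.
From mathcomp Require Import reals trigo.
From mathcomp Require Import ring lra.
Import Order.TTheory GRing.Theory Num.Theory.
Local Open Scope ring_scope.
Set Implicit Arguments. Unset Strict Implicit. Unset Printing Implicit Defensive.
Section S. Variable R : realType.
Local Notation C := R[i].

Lemma expiD (s r : R) : expi s * expi r = expi (s + r).
Proof. rewrite /expi cosD sinD /=. congr Complex; ring. Qed.

Lemma expiJ (s : R) : (expi s)^* = expi (- s).
Proof. by rewrite /expi cosN sinN. Qed.

Lemma expi0 : expi 0 = 1 :> C.
Proof. by rewrite /expi cos0 sin0. Qed.

Lemma expiJK (s : R) : expi s * (expi s)^* = 1.
Proof. by rewrite expiJ expiD subrr expi0. Qed.

Lemma expi_eq1 (c : R) : (forall t, expi (c * t) = 1) -> c = 0.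
Proof.
move=> H; apply/eqP; apply/negPn/negP => cn0.
have := H (pi / c); rewrite mulrC divfK // /expi cospi => /(congr1 (@complex.Re R)) /=.
move/eqP; rewrite -subr_eq0 -opprD oppr_eq0 (_ : 1 + 1 = 2%:R) // pnatr_eq0 //.
Qed.

Lemma sum_pick n (F : 'I_n -> C) k : \sum_(i < n) F i * (i == k)%:R = F k.
Proof.
rewrite (bigD1 k) //= eqxx mulr1 big1 ?addr0 // => i /negPf ->; by rewrite mulr0.
Qed.

Lemma evolE m (a : 'I_m -> R) t (M : 'M[C]_m) u v :
  (evol a t *m M *m adjmx (evol a t)) u v =
  expi (- (a u * t)) * M u v * (expi (- (a v * t)))^*.
Proof.
rewrite /evol /adjmx mul_diag_mx !mxE.
under eq_bigr => j _ do rewrite !mxE.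
rewrite (bigD1 v) //= eqxx mulr1n big1 ?addr0 // => j; rewrite eq_sym => /negPf ->; by rewrite mulr0n rmorph0 mulr0.
Qed.


Lemma evol_delta m (a : 'I_m -> R) t (x y : 'I_m) :
  evol a t *m delta_mx x y *m adjmx (evol a t) =
  (expi (-(a x * t)) * (expi (-(a y * t)))^*) *: delta_mx x y.
Proof.
apply/matrixP => u v; rewrite evolE !mxE.
case: (u =P x) => [->|_]; case: (v =P y) => [->|_] /=;
  by rewrite ?eqxx ?mulr1 ?mulr0 ?mul0r.
Qed.

Definition covd m (a : 'I_m -> R) (E : 'M[C]_m -> 'M[C]_m) := forall x y t,
  E (evol a t *m delta_mx x y *m adjmx (evol a t))
  = evol a t *m E (delta_mx x y) *m adjmx (evol a t).

Definition supp m (E : 'M[C]_m -> 'M[C]_m) := forall x y u v,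
  E (delta_mx x y) u v != 0 -> (x = u /\ y = v) \/ (x = y /\ u = v).

Lemma supp_covd m (a : 'I_m -> R) (E : {linear 'M[C]_m -> 'M[C]_m}) :
  supp E -> covd a E.
Proof.
move=> S x y t; rewrite evol_delta linearZZ; apply/matrixP => u v.
rewrite evolE !mxE.
have [->|nz] := eqVneq (E (delta_mx x y) u v) 0; first by rewrite !mulr0 mul0r.
case: (S _ _ _ _ nz) => [[<- <-]|[<- <-]].
  by rewrite mulrAC.
by rewrite expiJK mul1r mulrAC expiJK mul1r.
Qed.

Lemma covd_supp m (a : 'I_m -> R) (E : {linear 'M[C]_m -> 'M[C]_m}) :
  nondegenerate_bohr a -> covd a E -> supp E.
Proof.
move=> ND H x y u v nz.
have key : forall t, expi (((a y - a x) - (a v - a u)) * t) = 1.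
  move=> t; have := congr1 (fun M : 'M[C]_m => M u v) (H x y t).
  rewrite evol_delta linearZZ evolE !mxE => eq1.
  have eq2 : expi (-(a x* t)) * (expi (-(a y* t)))^* =
             expi (-(a u* t)) * (expi (-(a v* t)))^*.
    by apply: (mulIf nz); rewrite eq1 mulrAC.
  rewrite !expiJ !expiD in eq2.
  have -> : ((a y - a x) - (a v - a u)) * t =
     (-(a x* t) + - - (a y* t)) + - (-(a u* t) + - - (a v* t)) by ring.
  by rewrite -expiD eq2 expiD subrr expi0.
have /eqP := expi_eq1 key; rewrite subr_eq0 => /eqP h.
have h2 : a x - a y = a u - a v by lra.
by have := (proj1 (ND x y u v)) h2.
Qed.

Lemma covd_cov m (a : 'I_m -> R) (E : {linear 'M[C]_m -> 'M[C]_m}) :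
  covd a E -> time_covariant a E.
Proof.
move=> H t rho _.
rewrite [rho]matrix_sum_delta !(mulmx_suml, mulmx_sumr, linear_sum).
apply: eq_bigr => i _; rewrite !(mulmx_suml, mulmx_sumr, linear_sum).
apply: eq_bigr => j _.
by rewrite -scalemxAr -scalemxAl !linearZZ H /= scalemxAl.
Qed.

Lemma adjmxE p q (A : 'M[C]_(p, q)) i j : adjmx A i j = (A j i)^*.
Proof. by rewrite !mxE. Qed.

Lemma adjmxK p q (A : 'M[C]_(p, q)) : adjmx (adjmx A) = A.
Proof. by apply/matrixP => i j; rewrite !adjmxE conjCK. Qed.

Lemma adjmxM p q r (A : 'M[C]_(p, q)) (B : 'M[C]_(q, r)) :
  adjmx (A *m B) = adjmx B *m adjmx A.
Proof. by rewrite /adjmx map_mxM trmx_mul. Qed.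

Lemma adjmxD p q (A B : 'M[C]_(p, q)) : adjmx (A + B) = adjmx A + adjmx B.
Proof. by apply/matrixP => i j; rewrite !mxE rmorphD. Qed.

Lemma adjmxZ p q c (A : 'M[C]_(p, q)) : adjmx (c *: A) = c^* *: adjmx A.
Proof. by apply/matrixP => i j; rewrite !mxE rmorphM. Qed.

Lemma adjmx_delta p q (i : 'I_p) (j : 'I_q) :
  adjmx (delta_mx i j : 'M[C]_(p, q)) = delta_mx j i.
Proof. by apply/matrixP => u v; rewrite !mxE conjC_nat andbC. Qed.

Lemma mx11E (A : 'M[C]_(1,1)) (B : 'M[C]_1) : (A *m B) 0 0 = A 0 0 * B 0 0.
Proof. by rewrite !mxE big_ord1. Qed.

Lemma psd_rank1 n (c : C) (v : 'cV[C]_n) : 0 <= c -> psd (c *: (v *m adjmx v)).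
Proof.
move=> hc; have cc : c^* = c by apply: conj_Creal; apply: ger0_real.
split; first by rewrite adjmxZ adjmxM adjmxK cc.
move=> u; rewrite -scalemxAr -scalemxAl mxE !mulmxA -(mulmxA (adjmx u *m v)) mx11E.
have -> : adjmx v *m u = adjmx (adjmx u *m v) by rewrite adjmxM adjmxK.
rewrite adjmxE -normCK.
by apply: mulr_ge0 => //; apply: exprn_ge0.
Qed.

Lemma psd_congr p q (J : 'M[C]_p) (P : 'M[C]_(p, q)) :
  psd J -> psd (adjmx P *m J *m P).
Proof.
move=> [hJ hq]; split; first by rewrite !adjmxM adjmxK -hJ mulmxA.
move=> v; have := hq (P *m v); rewrite adjmxM !mulmxA.
by [].
Qed.

Lemma psd_diag p (J : 'M[C]_p) k : psd J -> 0 <= J k k.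
Proof.
move=> [_ hq]; have := hq (delta_mx k 0).
rewrite adjmx_delta -rowE mxE (bigD1 k) //= big1 ?addr0.
  by rewrite !mxE eqxx mulr1.
by move=> i /negPf hi; rewrite !mxE hi mulr0.
Qed.


Lemma tr_delta n (x y : 'I_n) : \tr (delta_mx x y : 'M[C]_n) = (x == y)%:R.
Proof.
rewrite /mxtrace (bigD1 x) //= big1 ?addr0; first by rewrite mxE eqxx.
by move=> i /negPf hi; rewrite mxE hi.
Qed.

Lemma dd_adj n (x y : 'I_n) :
  (delta_mx x 0 : 'cV[C]_n) *m adjmx (delta_mx y 0) = delta_mx x y.
Proof. by rewrite adjmx_delta mul_delta_mx. Qed.

Lemma natr_and (p q : bool) : ((p && q)%:R : C) = p%:R * q%:R.
Proof. by case: p; case: q; rewrite ?mulr1 ?mulr0. Qed.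

Lemma ww_adj n (x y : 'I_n) (c : C) :
  let w := (delta_mx x 0 : 'cV[C]_n) + c *: delta_mx y 0 in
  w *m adjmx w = delta_mx x x + c^* *: delta_mx x y + c *: delta_mx y x
                 + (c * c^*) *: delta_mx y y.
Proof.
move=> w; apply/matrixP => i j; rewrite /w !mxE big_ord1 !mxE /=.
rewrite !rmorphD !rmorphM /= !conjC_nat.
have -> : (ord0 == 0 :> 'I_1) = true by [].
rewrite !andbT !natr_and; ring.
Qed.

Lemma state_delta n (x : 'I_n) : is_state (delta_mx x x : 'M[C]_n).
Proof.
split; last by rewrite tr_delta eqxx.
by rewrite -dd_adj -[_ *m _]scale1r; apply: psd_rank1; rewrite ler01.
Qed.

Lemma state_ww n (x y : 'I_n) (c : C) : x != y -> c * c^* = 1 ->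
  let w := (delta_mx x 0 : 'cV[C]_n) + c *: delta_mx y 0 in
  is_state (2^-1 *: (w *m adjmx w)).
Proof.
move=> nxy hc w; split; first by apply: psd_rank1; rewrite invr_ge0 ler0n.
rewrite mxtraceZ ww_adj !mxtraceD !mxtraceZ !tr_delta !eqxx (negPf nxy) eq_sym (negPf nxy).
by rewrite hc !mulr0 !addr0 mulr1 mulVf // pnatr_eq0.
Qed.

Lemma addE p q (A B : 'M[C]_(p, q)) i j : (A + B) i j = A i j + B i j.
Proof. by rewrite mxE. Qed.
Lemma sclE p q c (A : 'M[C]_(p, q)) i j : (c *: A) i j = c * A i j.
Proof. by rewrite mxE. Qed.

Lemma conjL_lin m (a : 'I_m -> R) t (c : C) (X Y : 'M[C]_m) :
  evol a t *m (c *: X + Y) *m adjmx (evol a t) =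
  c *: (evol a t *m X *m adjmx (evol a t)) + evol a t *m Y *m adjmx (evol a t).
Proof. apply/matrixP => u v; rewrite !(addE, sclE) !evolE !(addE, sclE).
move: (expi _) ((expi _)^*) => e1 e2.
by rewrite mulrDr mulrDl !mulrA (mulrC e1 c). Qed.

End S.

Section S. Variable R : realType. Local Notation C := R[i].
Lemma cov_covd m (a : 'I_m -> R) (E : {linear 'M[C]_m -> 'M[C]_m}) :
  time_covariant a E -> covd a E.
Proof.
move=> H x y t.
pose P X := E (evol a t *m X *m adjmx (evol a t)) = evol a t *m E X *m adjmx (evol a t).
have HP : forall (c : C) (X Y : 'M[C]_m), P X -> P Y -> P (c *: X + Y).
  move=> c X Y; rewrite /P => hX hY.
  by rewrite conjL_lin linearP /= hX hY linearP conjL_lin.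
have Z : evol a t *m 0 *m adjmx (evol a t) = 0.
  by apply/matrixP => u v; rewrite evolE !mxE mulr0 mul0r.
have P0 : P 0 by rewrite /P Z linear0 Z.
have HZ : forall c X, P X -> P (c *: X).
  by move=> c X hX; have := HP c X 0 hX P0; rewrite addr0.
have HA : forall X Y, P X -> P Y -> P (X + Y).
  by move=> X Y hX hY; have := HP 1 X Y hX hY; rewrite scale1r.
have HS : forall X, is_state X -> P X by move=> X hX; exact: H.
have Pd : forall z, P (delta_mx z z) by move=> z; apply: HS; apply: state_delta.
have [<-|nxy] := eqVneq x y; first exact: Pd.
have Pw : forall c : C, c * c^* = 1 ->
   P (((delta_mx x 0 : 'cV[C]_m) + c *: delta_mx y 0) *m
       adjmx ((delta_mx x 0 : 'cV[C]_m) + c *: delta_mx y 0)).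
  move=> c hc; have := HZ 2 _ (HS _ (state_ww nxy hc)).
  by rewrite scalerA mulfV ?scale1r // pnatr_eq0.
have hi : 'i * 'i^* = 1 :> C by rewrite conjCi mulrN -expr2 sqrCi opprK.
have h1 : 1 * 1^* = 1 :> C by rewrite conjC1 mulr1.
pose w1 : 'cV[C]_m := delta_mx x 0 + 1 *: delta_mx y 0.
pose wi : 'cV[C]_m := delta_mx x 0 + 'i *: delta_mx y 0.
have Hid : delta_mx x y = 2^-1 *: (w1 *m adjmx w1 + ('i *: (wi *m adjmx wi)
   + ((-(1 + 'i)) *: delta_mx x x + (-(1 + 'i)) *: delta_mx y y))).
  rewrite /w1 /wi !ww_adj conjCi conjC1.
  move: (delta_mx x x) (delta_mx x y) (delta_mx y x) (delta_mx y y) => A B D F.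
  apply/matrixP => u v; rewrite !(addE, sclE).
  have i2 : 'i * 'i = -1 :> C by rewrite -expr2 sqrCi.
  have h2 : (2 : C) != 0 by rewrite pnatr_eq0.
  apply: (mulfI h2); rewrite mulrA mulfV // mul1r.
  ring: i2.
change (P (delta_mx x y)); rewrite Hid.
apply HZ; apply HA; first exact (Pw 1 h1).
apply HA; first by apply HZ; exact (Pw _ hi).
by apply HA; apply HZ; apply Pd.
Qed.

End S.

Section S. Variable R : realType. Local Notation C := R[i].

Lemma sum_one n (F : 'I_n -> C) k : (forall i, i != k -> F i = 0) -> \sum_i F i = F k.
Proof. by move=> h; rewrite (bigD1 k) //= big1 ?addr0 // => i /h. Qed.

Lemma choiE m (E : 'M[C]_m -> 'M[C]_m) a u b v :
  choi E (mxtens_index (a, u)) (mxtens_index (b, v)) = E (delta_mx a b) u v.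
Proof.
rewrite /choi summxE (sum_one (k:=a)) => [|x hx]; last first.
  rewrite summxE big1 // => x' _; rewrite tensmxE mxE (eq_sym a) (negPf hx) /= mul0r //.
rewrite summxE (sum_one (k:=b)) => [|x hx]; last first.
  by rewrite tensmxE mxE (eq_sym b) (negPf hx) andbF mul0r.
by rewrite tensmxE mxE !eqxx mul1r.
Qed.

Definition wme m : 'cV[C]_(m * m) :=
  \col_i (((mxtens_unindex i).1 == (mxtens_unindex i).2)%:R).

Lemma choi_psd m (E : {linear 'M[C]_m -> 'M[C]_m}) :
  completely_positive E -> psd (choi E).
Proof.
move=> CP.
have -> : choi E = ampl E (1 *: (wme m *m adjmx (wme m))).
  apply/matrixP => i j; rewrite -(mxtens_unindexK i) -(mxtens_unindexK j).
  move: (mxtens_unindex i) (mxtens_unindex j) => [a u] [b v].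
  rewrite choiE mxE !mxtens_indexK /=. congr (E _ u v). apply/matrixP => s t.
  rewrite !mxE big_ord1 !mxE !mxtens_indexK /= conjC_nat.
  by rewrite natr_and mul1r (eq_sym a) (eq_sym b).
by apply: (CP m); apply: psd_rank1; exact: ler01.
Qed.
End S.

Section S. Variable R : realType. Local Notation C := R[i].

Definition RHSm m (p : 'I_m -> 'I_m -> R) (Q : 'M[C]_m) : 'M[C]_(m * m) :=
  \sum_(x < m) \sum_(y < m)
     (p x y)%:C%C *: (delta_mx x x *t delta_mx y y)
  + \sum_(x < m) \sum_(y < m | y != x)
     Q x y *: (delta_mx x y *t delta_mx x y).

Lemma RHS_entry m p (Q : 'M[C]_m) a u b v :
  RHSm p Q (mxtens_index (a, u)) (mxtens_index (b, v)) =
  ((a == b) && (u == v))%:R * (p a u)%:C%C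
  + ((a != b) && (a == u) && (b == v))%:R * Q a b.
Proof.
rewrite /RHSm addE !summxE.
congr (_ + _).
  rewrite (sum_one (k:=a)) => [|x hx]; last first.
    rewrite summxE big1 // => y _.
    by rewrite sclE tensmxE mxE (eq_sym a) (negPf hx) /= mul0r mulr0.
  rewrite summxE (sum_one (k:=u)) => [|y hy]; last first.
    by rewrite sclE tensmxE !mxE (eq_sym u) (negPf hy) /= mulr0 mulr0.
  rewrite sclE tensmxE !mxE !eqxx /= (eq_sym b) (eq_sym v).
  by case: (a == b); case: (u == v); rewrite /= ?mulr1 ?mulr0 ?mul1r ?mul0r.
rewrite (sum_one (k:=a)) => [|x hx]; last first.
  rewrite summxE big1 // => y _.
  by rewrite sclE tensmxE mxE (eq_sym a) (negPf hx) /= mul0r mulr0.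
rewrite summxE big_mkcond /= (sum_one (k:=b)) => [|y hy]; last first.
  case: ifP => // _.
  by rewrite sclE tensmxE !mxE (eq_sym b) (negPf hy) andbF mul0r mulr0.
rewrite (eq_sym b a).
case: (a =P b) => [->|nab] /=; first by rewrite mul0r.
rewrite sclE tensmxE !mxE !eqxx /= (eq_sym u) (eq_sym v).
by case: (a == u); case: (b == v); rewrite /= ?mulr1 ?mulr0 ?mul1r ?mul0r // mulrC.
Qed.
End S.

Section S. Variable R : realType. Local Notation C := R[i].

Lemma realC (z : C) : 0 <= z -> z = (complex.Re z)%:C%C.
Proof. by move=> h; move: (ger0_Im h); case: z {h} => x y /= ->. Qed.

Definition Pmx m : 'M[C]_(m * m, m) := \matrix_(i, x) (i == mxtens_index (x, x))%:R.

Lemma Q_eq m (J : 'M[C]_(m * m)) :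
  adjmx (Pmx m) *m J *m Pmx m = \matrix_(x, y) J (mxtens_index (x, x)) (mxtens_index (y, y)).
Proof.
apply/matrixP => x y; rewrite !mxE (sum_one (k:=mxtens_index (y, y))) => [|j hj]; last first.
  by rewrite [Pmx m j y]mxE (negPf hj) mulr0.
rewrite [Pmx m _ y]mxE eqxx mulr1 mxE (sum_one (k:=mxtens_index (x, x))) => [|i hi]; last first.
  by rewrite !mxE (negPf hi) conjC0 mul0r.
by rewrite !mxE eqxx conjC1 mul1r.
Qed.
End S.


Lemma Z0 (R : realType) (M : R[i]) : ~ (M != 0) -> M = 0.
Proof. by move=> h; apply/eqP/negPn/negP. Qed.

Unset Implicit Arguments.
Theorem lemma4 (R : realType) (m : nat) (a : 'I_m -> R)
  (E : {linear 'M[R[i]]_m -> 'M[R[i]]_m}) :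
  nondegenerate_bohr a ->
  quantum_channel E ->
  (time_covariant a E <->
   exists (p : 'I_m -> 'I_m -> R) (Q : 'M[R[i]]_m),
     [/\ (forall x y, 0 <= p x y),
         (forall x, \sum_(y < m) p x y = 1),
         psd Q,
         (forall x, Q x x = (p x x)%:C)%C &
         choi E =
           \sum_(x < m) \sum_(y < m)
              (p x y)%:C%C *: (delta_mx x x *t delta_mx y y)
           + \sum_(x < m) \sum_(y < m | y != x)
              Q x y *: (delta_mx x y *t delta_mx x y)]).
Proof.
move=> ND [CP TP]; split.
- move=> Hcov.
  have S := covd_supp ND (cov_covd Hcov).
  have J := choi_psd CP.
  have D : forall x y, 0 <= E (delta_mx x x) y y.
    by move=> x y; rewrite -choiE; apply: psd_diag.
  pose p x y := complex.Re (E (delta_mx x x) y y).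
  have Ep : forall x y, E (delta_mx x x) y y = (p x y)%:C%C.
    by move=> x y; apply: realC.
  pose Q := \matrix_(x, y) E (delta_mx x y) x y.
  exists p, Q; split.
  + by move=> x y; rewrite -ler0c -Ep.
  + move=> x; apply: complexI; rewrite raddf_sum /=.
    under eq_bigr do rewrite -Ep.
    rewrite -[\sum_(i < m) _]/(\tr (E (delta_mx x x))) TP tr_delta eqxx //.
  + have -> : Q = adjmx (Pmx R m) *m choi E *m Pmx R m.
      by rewrite Q_eq; apply/matrixP => x y; rewrite !mxE choiE.
    exact: psd_congr.
  + by move=> x; rewrite mxE Ep.
  + change (choi E = RHSm p Q).
    apply/matrixP => i j; rewrite -(mxtens_unindexK i) -(mxtens_unindexK j).
    move: (mxtens_unindex i) (mxtens_unindex j) => [x u] [y v].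
    rewrite choiE RHS_entry.
    case: (x =P y) => [<-|nxy].
      case: (u =P v) => [<-|nuv]; first by rewrite /= mul1r mul0r addr0 Ep.
      rewrite /= !mul0r addr0; apply: (@Z0 R) => nz.
      by case: (S _ _ _ _ nz) => [[h1 h2]|[_ h]]; apply: nuv; rewrite // -h1 -h2.
    rewrite /= mul0r add0r.
    case: (x =P u) => [<-|nxu]; case: (y =P v) => [<-|nyv] /=;
      rewrite ?mul1r ?mul0r; first by rewrite mxE.
    1-3: apply: (@Z0 R) => nz; case: (S _ _ _ _ nz) => [[h1 h2]|[h _]] //.
- move=> [p [Q [p0 p1 Qpsd Qd Hc]]].
  apply: covd_cov; apply: supp_covd => x y u v.
  have := congr1 (fun M : 'M[R[i]]_(m * m) => M (mxtens_index (x, u)) (mxtens_index (y, v))) Hc.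
  rewrite choiE -/(RHSm p Q) RHS_entry => ->.
  case: (x =P y) => [<-|nxy].
    case: (u =P v) => [<-|nuv]; first by right.
    by rewrite /= !mul0r addr0 eqxx.
  rewrite /= mul0r add0r.
  case: (x =P u) => [<-|nxu]; case: (y =P v) => [<-|nyv] /=; first by left.
  all: by rewrite mul0r eqxx.
Qed.
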